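(* Let $J=\{m_1,\dots,m_d\}\subset\mathbb{Z}_n$ be a $d$-element subset that generates $\mathbb{Z}_n$ and is exceptional. Then there exist $n$-th roots of unity $z_{d+1},\dots,z_{2d}$ such that $$z=(\omega^{m_1},\dots,\omega^{m_d},z_{d+1},\dots,z_{2d})\in V$$ and $z$ is an exceptional point, i.e. $(z_{d+1},\dots,z_{2d})$ is not a permutation of $(\omega^{m_1},\dots,\omega^{m_d})$.
   Context: Let $\omega=e^{2\pi i/n}$. For a $d$-element subset $J\subset\mathbb{Z}_n$, the cyclic harmonic frame $\Phi_J$ is the sequence $(v_k)_{k\in\mathbb{Z}_n}$ with $v_k=(\omega^{jk})_{j\in J}\in\mathbb{C}^J\cong\mathbb{C}^d$. Two finite sequences $(v_k)_{k\in I}$, $(w_k)_{k\in I'}$ in $\mathbb{C}^d$ are unitarily equivalent if there is a unitary $U$ and a bijection $\sigma:I\to I'$ with $v_k=Uw_{\sigma(k)}$ for all $k$. Two $d$-element subsets $J,K\subset\mathbb{Z}_n$ are multiplicatively equivalent if $K=aJ=\{aj:j\in J\}$ for some unit $a\in\mathbb{Z}_n^*$. A $d$-element subset $J\subset\mathbb{Z}_n$ is exceptional if there is a $d$-element subset $K\subset\mathbb{Z}_n$, not multiplicatively equivalent to $J$, such that $\Phi_J$ and $\Phi_K$ are unitarily equivalent. Let $V=\{z\in\mathbb{C}^{2d}:\sum_{j=1}^d z_j-\sum_{j=d+1}^{2d}z_j=0\}$. A point $z\in V$ whose coordinates are roots of unity is called exceptional if $(z_{d+1},\dots,z_{2d})$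 is not a permutation of $(z_1,\dots,z_d)$. *)

(* Defs.v *)
From HB Require Import structures.
From mathcomp Require Import all_boot all_order all_fingroup all_algebra all_field.
From mathcomp Require Import spectral.
Set Implicit Arguments. Unset Strict Implicit. Unset Printing Implicit Defensive.
Import Order.TTheory GRing.Theory Num.Theory.
Local Open Scope ring_scope.

(* omega = e^{2 pi i / n}.  n.-root (-1) is the n-th root of -1 with minimal
   nonnegative argument, i.e. e^{i pi / n}; its square is e^{2 pi i / n}. *)
Definition omega (n : nat) : algC := (n.-root (-1)) ^+ 2.

(* Elements of Z_n are represented by 'I_n; a d-element subset J of Z_n is
   given by an injective enumeration m : 'I_d -> 'I_n (J = {m_1,...,m_d}). *)
Definition subset_of (n d : nat) (m : 'I_d -> 'I_n) : {set 'I_n} :=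
  [set m i | i : 'I_d].

Definition harm_vec (n d : nat) (m : 'I_d -> 'I_n) (k : 'I_n) : 'cV[algC]_d :=
  \col_(i < d) omega n ^+ (m i * k)%N.

Definition unit_equiv (n d : nat) (m m' : 'I_d -> 'I_n) : Prop :=
  exists (U : 'M[algC]_d) (s : 'I_n -> 'I_n),
    U \is unitarymx /\ bijective s /\
    forall k : 'I_n, harm_vec m k = U *m harm_vec m' (s k).

Definition mult_equiv (n : nat) (J K : {set 'I_n}) : Prop :=
  exists a : 'I_n, coprime a n /\
    forall k : 'I_n, (k \in K) = [exists j in J, ((a * j) %% n)%N == k].

Definition generates (n : nat) (J : {set 'I_n}) : Prop :=
  forall x : 'I_n, exists c : 'I_n -> nat,
    (x : nat) = ((\sum_(j in J) c j * j) %% n)%N.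

Definition exceptional (n d : nat) (m : 'I_d -> 'I_n) : Prop :=
  exists m' : 'I_d -> 'I_n, injective m' /\
    ~ mult_equiv (subset_of m) (subset_of m') /\ unit_equiv m m'.

Definition in_V (d : nat) (z : 'I_(d + d) -> algC) : Prop :=
  \sum_(j < d) z (lshift d j) - \sum_(j < d) z (rshift d j) = 0.

Definition is_root_of_unity (x : algC) : Prop := exists k : nat, (0 < k)%N /\ x ^+ k = 1.

Definition exceptional_point (d : nat) (z : 'I_(d + d) -> algC) : Prop :=
  in_V z /\ (forall i, is_root_of_unity (z i)) /\
  ~ (exists s : 'S_d, forall j : 'I_d, z (rshift d (s j)) = z (lshift d j)).

Definition join_pt (d : nat) (x y : 'I_d -> algC) : 'I_(d + d) -> algC :=
  fun i => match split i with inl j => x j | inr j => y j end.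

(* Main.v *)
Require Import Defs.
From HB Require Import structures.
From mathcomp Require Import all_boot all_order all_fingroup all_algebra all_field.
From mathcomp Require Import spectral cyclic.
From mathcomp.algebra_tactics Require Import ring.
Set Implicit Arguments. Unset Strict Implicit. Unset Printing Implicit Defensive.
Import Order.TTheory GRing.Theory Num.Theory.
Local Open Scope ring_scope.

Lemma ringid1 (R : comRingType) (c a s b : R) :
  c * (1 - a) + s * b = c - (c * a - s * b).
Proof. by ring. Qed.
Lemma ringid2 (R : comRingType) (c a s b : R) :
  c * (1 - a) - s * b = c - (c * a - (- s) * b).
Proof. by ring. Qed.
Lemma ringid3 (R : comRingType) (c a s b : R) :
  (c * (1 - a) - s * b) * (c * (1 - a) + s * b) =
  (1 - a) * (c * c - s * s - a) + (a ^+ 2 - a) * (c ^+ 2 + s ^+ 2 - 1) - s ^+ 2 * (a ^+ 2 + b ^+ 2 - 1).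
Proof. by ring. Qed.

Lemma norm_pow1 (u : algC) n : (0 < n)%N -> u ^+ n = 1 -> `|u| = 1.
Proof.
move=> n0 H; have := congr1 Num.norm H; rewrite normrX normr1 => /eqP.
by rewrite pexpr_eq1 // => /eqP.
Qed.

Lemma norm_powN1 (u : algC) n : (0 < n)%N -> u ^+ n = -1 -> `|u| = 1.
Proof.
move=> n0 H; have := congr1 Num.norm H; rewrite normrX normrN1 => /eqP.
by rewrite pexpr_eq1 // => /eqP.
Qed.

Lemma Re_Im1 (u : algC) : `|u| = 1 -> 'Re u ^+ 2 + 'Im u ^+ 2 = 1.
Proof. by move=> H; rewrite -normC2_Re_Im H expr1n. Qed.

Lemma Re_lt1 (u : algC) n : (0 < n)%N -> u ^+ n = 1 -> u != 1 -> 'Re u < 1.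
Proof.
move=> n0 H u1; rewrite -(norm_pow1 n0 H) (lt_leif (leif_Re_Creal u)).
apply/negP => u0; move: u1; have := H; move/eqP; rewrite pexpr_eq1 // => ->.
by [].
Qed.

Lemma root_max n (y : algC) : (0 < n)%N -> y ^+ n = -1 ->
  'Re y <= 'Re (n.-root (-1)).
Proof.
move=> n0 H.
have [|/ltW] := real_ge0P (Creal_Im y); first exact: rootC_Re_max.
move=> hy; rewrite -Re_conj; apply: rootC_Re_max => //.
  by rewrite -rmorphXn H rmorphN1.
by rewrite Im_conj oppr_ge0.
Qed.

Lemma step1 n (u : algC) : (1 < n)%N -> u ^+ n = 1 -> u != 1 ->
  'Re u <= 'Re ((n.-root (-1)) ^+ 2).
Proof.
move=> n1 un u1; have n0 : (0 < n)%N by apply: ltnW.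
set z := n.-root (-1).
have zn : z ^+ n = -1 by rewrite /z rootCK.
have zcn : z^* ^+ n = -1 by rewrite -rmorphXn zn rmorphN1.
have h1 := root_max n0 (_ : (z * u) ^+ n = -1).
have h2 := root_max n0 (_ : (z^* * u) ^+ n = -1).
move: h1 h2; rewrite exprMn zn un mulr1 => /(_ erefl) h1.
rewrite exprMn zcn un mulr1 => /(_ erefl) h2.
rewrite -/z !ReM Re_conj Im_conj in h1 h2.
have ez := Re_Im1 (norm_powN1 n0 zn).
have eu := Re_Im1 (norm_pow1 n0 un).
have a1 := Re_lt1 n0 un u1.
rewrite expr2 ReM.
set c := 'Re z in h1 h2 ez *; set s := 'Im z in h1 h2 ez *.
set a := 'Re u in h1 h2 eu a1 *; set b := 'Im u in h1 h2 eu *.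
have X0 : 0 <= c * (1 - a) - s * b.
  by rewrite ringid2 subr_ge0.
have Y0 : 0 <= c * (1 - a) + s * b.
  by rewrite ringid1 subr_ge0.
have := mulr_ge0 X0 Y0.
rewrite ringid3.
rewrite ez eu !subrr mulr0 mulr0 subr0 addr0 pmulr_rge0 ?subr_gt0 //.
by rewrite subr_ge0.
Qed.

Lemma ringid4 (R : comRingType) (x a t b : R) :
  (x * (1 - a) + t * b) + (x * (1 - a) - t * b) = (1 - a) * (x * 2).
Proof. by ring. Qed.
Lemma ringid5 (R : comRingType) (x a t : R) :
  x * x - t * t - a = (x * x - a * a) * 2 - (1 - a) * (1 + (a + a)) - (x ^+ 2 + t ^+ 2 - 1).
Proof. by ring. Qed.
Lemma ringid6 (R : comRingType) (c a s b : R) :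
  c * (1 - a) - s * b = c - (c * a - s * - b).
Proof. by ring. Qed.

Lemma ineqA (x t a b : algC) : x ^+ 2 + t ^+ 2 = 1 -> a ^+ 2 + b ^+ 2 = 1 -> a < 1 ->
  x * a - t * b <= x -> x * a - t * - b <= x -> x <= a -> False.
Proof.
move=> hx ha a1 h1 h2 xa.
have X0 : 0 <= x * (1 - a) + t * b by rewrite ringid1 subr_ge0.
have Y0 : 0 <= x * (1 - a) - t * b by rewrite ringid6 subr_ge0.
have a1' : 0 < 1 - a by rewrite subr_gt0.
have x0 : 0 <= x.
  have := addr_ge0 X0 Y0; rewrite ringid4 pmulr_rge0 // pmulr_lge0 //.
have := mulr_ge0 Y0 X0; rewrite ringid3 hx ha !subrr !mulr0 subr0 addr0.
rewrite pmulr_rge0 // ringid5 hx subrr subr0.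
have a0 : 0 <= a := le_trans x0 xa.
have P : x * x - a * a <= 0 by rewrite subr_le0 ler_pM.
have Q : 0 < (1 - a) * (1 + (a + a)).
  rewrite mulr_gt0 // (lt_le_trans ltr01) // lerDl addr_ge0 //.
have : (x * x - a * a) * 2 <= 0 by rewrite mulr_le0_ge0 // ler0n.
move=> P2 H; have L := le_lt_trans P2 Q; rewrite -subr_lt0 in L.
by have := lt_le_trans L H; rewrite ltxx.
Qed.

Lemma ex_max (f : nat -> algC) k : (0 < k)%N -> (forall i, f i \is Num.real) ->
  exists2 j, (j < k)%N & forall i, (i < k)%N -> f i <= f j.
Proof.
move=> + fr; elim: k => // k IH _.
case: k IH => [_|k IH].
  by exists 0%N => // i; rewrite ltnS leqn0 => /eqP ->.
have [j jk hj] := IH erefl.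
have /orP[le|le] := real_leVge (fr j) (fr k.+1).
  exists k.+1 => // i; rewrite ltnS leq_eqVlt => /orP[/eqP -> //|ik].
  exact: le_trans (hj i ik) le.
exists j; first exact: ltnW.
move=> i; rewrite ltnS leq_eqVlt => /orP[/eqP -> //|ik].
exact: hj.
Qed.

Lemma neqN1 : (1 : algC) != -1.
Proof.
apply/eqP => h; have : (2%:R : algC) == 0 by rewrite mulr2n {2}h subrr.
by rewrite pnatr_eq0.
Qed.

Lemma q_neq1 n : (1 < n)%N -> (n.-root (-1 : algC)) ^+ 2 != 1.
Proof.
move=> n1; have n0 : (0 < n)%N by apply: ltnW.
set z := n.-root (-1 : algC).
have zn : z ^+ n = -1 by rewrite /z rootCK.
rewrite sqrf_eq1; apply/negP => /orP[/eqP z1|/eqP z1].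
  by move: zn; rewrite z1 expr1n => /eqP; rewrite (negbTE neqN1).
have [nu nup] := C_prim_root_exists n0.
have nu1 : nu != 1.
  by apply/negP => /eqP e; have := prim_order_dvd nup 1; rewrite e expr1n eqxx gtnNdvd.
have hn : (- nu) ^+ n = -1.
  by rewrite -[- nu]mulN1r exprMn (prim_expr_order nup) mulr1 -z1 zn.
have Rz : 'Re z = -1 by rewrite z1 raddfN /= (Creal_ReP 1 _) ?rpred1.
have := root_max n0 hn.
rewrite -/z Rz raddfN /= lerN2 => h.
have := Re_lt1 n0 (prim_expr_order nup) nu1.
by move=> l; have := lt_le_trans l h; rewrite ltxx.
Qed.


Lemma omega_prim n : (0 < n)%N -> n.-primitive_root (omega n).
Proof.
move=> n0; set q := omega n.
have qn : q ^+ n = 1.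
  by rewrite /q /omega -exprM mulnC exprM rootCK // expr2 mulN1r opprK.
have [k kq kn] := prim_order_exists n0 qn.
have k0 := prim_order_gt0 kq.
have [<- //|knn] := eqVneq k n.
have kltn : (k < n)%N by rewrite ltn_neqAle knn dvdn_leq.
have n1 : (1 < n)%N by apply: leq_ltn_trans kltn.
have [nu nup] := C_prim_root_exists n0.
have nuk : nu ^+ k != 1 by rewrite -(prim_order_dvd nup) gtnNdvd.
have qk := prim_expr_order kq.
have [j jk hj] := @ex_max (fun i => 'Re (nu * q ^+ i)) k k0 (fun i => Creal_Re _).
set y := nu * q ^+ j.
have yn : y ^+ n = 1.
  by rewrite exprMn (prim_expr_order nup) -exprM mulnC exprM qn expr1n mul1r.
have y1 : y != 1.
  apply: contra nuk => /eqP yy.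
  have : y ^+ k = 1 by rewrite yy expr1n.
  by rewrite exprMn -exprM mulnC exprM qk expr1n mulr1 => ->.
have hy : 'Re y <= 'Re q := step1 n1 yn y1.
have q0 : q != 0.
  by apply/negP => /eqP q0; move: qk; rewrite q0 expr0n eqn0Ngt k0 /= => /eqP; rewrite eq_sym oner_eq0.
have h1 : 'Re (y * q) <= 'Re y.
  rewrite /y -mulrA -exprSr -(expr_mod _ qk); apply: hj; exact: ltn_pmod.
have nq := norm_pow1 n0 qn.
have qc : q^* = q ^+ k.-1.
  apply: (mulfI q0); rewrite -normCK nq expr1n -exprS prednK //.
have h2 : 'Re (y * q^*) <= 'Re y.
  rewrite qc /y -mulrA -exprD -(expr_mod _ qk); apply: hj; exact: ltn_pmod.
rewrite (ReM y q) in h1; rewrite (ReM y q^*) Im_conj Re_conj in h2.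
exfalso; apply: (ineqA (Re_Im1 (norm_pow1 n0 yn)) (Re_Im1 nq) _ h1 h2 hy).
exact: Re_lt1 n0 qn (q_neq1 n1).
Qed.

Section Gram.
Local Open Scope sesquilinear_scope.
Lemma gram d (U : 'M[algC]_d) (v1 v2 w1 w2 : 'cV[algC]_d) :
  U \is unitarymx -> v1 = U *m w1 -> v2 = U *m w2 ->
  \sum_i (v1 i 0)^* * v2 i 0 = \sum_i (w1 i 0)^* * w2 i 0.
Proof.
move=> Uu e1 e2.
have : v1 ^t* *m v2 = w1 ^t* *m w2.
  by rewrite e1 e2 trmx_mul map_mxM mulmxA mulmxKtV.
move/(congr1 (fun M : 'M_1 => M 0 0)); rewrite !mxE.
by under eq_bigr do rewrite !mxE; under [in RHS]eq_bigr do rewrite !mxE.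
Qed.
End Gram.

Lemma conj_unity (u : algC) n : (0 < n)%N -> u ^+ n = 1 -> u^* = u ^+ n.-1.
Proof.
move=> n0 un; have u0 : u != 0.
  by apply/negP => /eqP q0; move: un; rewrite q0 expr0n eqn0Ngt n0 /= => /eqP; rewrite eq_sym oner_eq0.
apply: (mulfI u0); rewrite -normCK (norm_pow1 n0 un) expr1n -exprS prednK //.
Qed.

Lemma join_l d (x y : 'I_d -> algC) j : join_pt x y (lshift d j) = x j.
Proof. by rewrite /join_pt (unsplitK (inl j : 'I_d + 'I_d)). Qed.
Lemma join_r d (x y : 'I_d -> algC) j : join_pt x y (rshift d j) = y j.
Proof. by rewrite /join_pt (unsplitK (inr j : 'I_d + 'I_d)). Qed.

Lemma dvdn_modX g a n : (g %| a)%N -> (g %| n)%N -> (g %| a %% n)%N.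
Proof.
move=> ga gn; have := ga; rewrite {1}(divn_eq a n) dvdn_addr //.
exact: dvdn_mull.
Qed.

Theorem lemma4p2 (n d : nat) (m : 'I_d -> 'I_n) :
  (0 < n)%N -> injective m ->
  generates (subset_of m) -> exceptional m ->
  exists y : 'I_d -> algC,
    (forall j, y j ^+ n = 1) /\
    exceptional_point (join_pt (fun i => omega n ^+ (m i : nat)) y).
Proof.
move=> n0 minj gen [m' [m'inj [nme [U [s [Uu [sbij hs]]]]]]].
have wp := omega_prim n0.
have wn := prim_expr_order wp.
pose k0 : 'I_n := Ordinal n0.
pose k1 : 'I_n := Ordinal (ltn_pmod 1 n0).
have G := gram Uu (hs k0) (hs k1).
pose e := (s k0 * n.-1 + s k1)%N.
pose y := fun i => omega n ^+ (m' i * e).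
have G' : \sum_i omega n ^+ (m i : nat) = \sum_i y i.
  move: G; rewrite /harm_vec.
  under eq_bigr do rewrite !mxE.
  under [in X in _ = X -> _]eq_bigr do rewrite !mxE.
  have L : forall i, (omega n ^+ (m i * k0))^* * omega n ^+ (m i * k1) = omega n ^+ (m i : nat).
    move=> i; rewrite /= muln0 expr0 rmorph1 mul1r.
    by apply/eqP; rewrite (eq_prim_root_expr wp) modnMmr muln1.
  have R : forall i, (omega n ^+ (m' i * s k0))^* * omega n ^+ (m' i * s k1) = y i.
    move=> i; rewrite rmorphXn -[X in X ^+ _]/(omega n)^* (conj_unity n0 wn).
    rewrite -(exprM (omega n)) -(exprD (omega n)) /y /e.
    apply/eqP; rewrite (eq_prim_root_expr wp); apply/eqP; congr (_ %% n)%N.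
    ring.
  by rewrite (eq_bigr _ (fun i _ => L i)) (eq_bigr _ (fun i _ => R i)).
have Y : forall j, y j ^+ n = 1.
  by move=> j; rewrite /y -(exprM (omega n)) mulnC (exprM (omega n)) wn expr1n.
have X : forall j, (omega n ^+ (m j : nat)) ^+ n = 1.
  by move=> j; rewrite -(exprM (omega n)) mulnC (exprM (omega n)) wn expr1n.
exists y; split => //; split.
  rewrite /in_V (eq_bigr _ (fun j _ => join_l _ _ j)).
  by rewrite (eq_bigr _ (fun j _ => join_r _ _ j)) G' subrr.
split.
  move=> i; exists n; split => //; rewrite /join_pt; case: split => j //.
case=> sp hsp.
have R : forall j, (m j : nat) = ((e * m' (sp j)) %% n)%N.
  move=> j; have := hsp j; rewrite join_l join_r /y => /eqP.
  rewrite (eq_prim_root_expr wp) => /eqP.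
  by rewrite (modn_small (ltn_ord (m j))) mulnC => ->.
case: (boolP (coprime e n)) => ce; last first.
  have n1 : (1 < n)%N.
    have : n != 1%N by apply: contraNneq ce => ->; rewrite coprimen1.
    by case: n n0 {m m' U s hs k0 k1 G G' y Y X R wn wp minj gen m'inj nme sbij e hsp sp Uu ce} => [|[|]].
  have [c hc] := gen (Ordinal n1).
  have gd : (gcdn e n %| \sum_(j in subset_of m) c j * j)%N.
    apply: dvdn_sum => j /imsetP[i _ ->]; apply: dvdn_mull.
    by rewrite R dvdn_modX ?dvdn_gcdr // dvdn_mulr // dvdn_gcdl.
  have : (gcdn e n %| 1)%N.
    by rewrite [1%N](_ : _ = (Ordinal n1 : nat)) // hc dvdn_modX // dvdn_gcdr.
  by rewrite dvdn1 => g1; move: ce; rewrite /coprime g1.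
exfalso; apply: nme.
pose b := (e ^ (totient n).-1)%N.
have be : (b * e = 1 %[mod n])%N.
  by rewrite /b -expnSr prednK ?totient_gt0 // Euler_exp_totient.
exists (Ordinal (ltn_pmod b n0)); split.
  by rewrite /= coprime_modl coprimeXl.
move=> k; apply/imsetP/existsP.
  case=> i _ ->; exists (m ((sp^-1)%g i)); apply/andP; split; first exact: imset_f.
  rewrite /= R permKV; apply/eqP.
  rewrite modnMml modnMmr mulnA -modnMml be modnMml mul1n modn_small //.
case=> j /andP[/imsetP[i _ ->] /eqP h]; exists (sp i) => //.
apply: val_inj; rewrite /= -h R.
by rewrite modnMml modnMmr mulnA -modnMml be modnMml mul1n modn_small.
Qed.
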